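(* Let $f,g:\mathbb{R}^n\to[0,+\infty)$ and $h_1,h_2:\mathbb{R}^n\to\mathbb{R}$, let $C\subseteq\mathbb{R}^n$ be closed and convex, $\Omega:=\{x\in\mathbb{R}^n:g(x)\neq0\}$, $C\cap\Omega\neq\emptyset$, and assume: $f$ is convex; $g$ is differentiable with locally Lipschitz gradient on $\mathbb{R}^n$; $h_1$ is differentiable with locally Lipschitz gradient on $\mathbb{R}^n$; $h_2$ is convex. If $x^\star$ is a local minimizer of the problem $\min\{f^2(x)/g(x)+h_1(x)-h_2(x):x\in C\cap\Omega\}$, then with $c_\star=f(x^\star)/g(x^\star)$ it holds that $$0\in\partial(2c_\star f+\iota_C)(x^\star)-c_\star^2\nabla g(x^\star)+\nabla h_1(x^\star)-\partial h_2(x^\star).$$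
   Context: $\iota_C$ is the indicator function of $C$ ($0$ on $C$, $+\infty$ off $C$). $\partial$ denotes the limiting (Mordukhovich) subdifferential, which coincides with the convex subdifferential for convex functions. *)

(* Defs.v *)
From HB Require Import structures.
From mathcomp Require Import all_boot all_order all_algebra.
From mathcomp Require Import all_classical all_reals all_analysis.
Set Implicit Arguments. Unset Strict Implicit. Unset Printing Implicit Defensive.
Import Order.TTheory GRing.Theory Num.Theory.
Import numFieldNormedType.Exports.
Local Open Scope classical_set_scope.
Local Open Scope ring_scope.

Section Defs.
Variables (R : realType) (n : nat).
Notation V := 'rV[R]_n.

Definition dotp (u v : V) : R := \sum_(i < n) u ord0 i * v ord0 i.

Definition grad (f : V -> R) (x : V) : V :=
  \row_(i < n) ('D_(delta_mx ord0 i) f x).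

Definition convex_setR (C : set V) : Prop :=
  forall x y (t : R), C x -> C y -> 0 <= t -> t <= 1 ->
    C (t *: x + (1 - t) *: y).

Definition convex_funR (f : V -> R) : Prop :=
  forall x y (t : R), 0 <= t -> t <= 1 ->
    f (t *: x + (1 - t) *: y) <= t * f x + (1 - t) * f y.

Definition locally_lipschitz (F : V -> V) : Prop :=
  forall x : V, exists2 r : R, 0 < r & exists L : R,
    forall y z : V, `|y - x| < r -> `|z - x| < r ->
      `|F y - F z| <= L * `|y - z|.

(* convex subdifferential of the (extended-valued) function phi + iota_C
   at x, where phi is real valued: empty if x is not in C, else the set of
   v with  phi y + iota_C y >= phi x + <v, y - x>  for all y, i.e. for all
   y in C (the inequality is trivial off C, where the LHS is +oo). *)
Definition subdiff_plus_ind (phi : V -> R) (C : set V) (x : V) : set V :=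
  [set v | C x /\ forall y, C y -> phi x + dotp v (y - x) <= phi y].

Definition subdiff (h : V -> R) (x : V) : set V :=
  [set v | forall y, h x + dotp v (y - x) <= h y].

End Defs.

(* Main.v *)
Require Import Defs.
From HB Require Import structures.
From mathcomp Require Import all_boot all_order all_algebra.
From mathcomp Require Import all_classical all_reals all_analysis.
From mathcomp Require Import lra ring.
Import Order.TTheory GRing.Theory Num.Theory.
Import numFieldNormedType.Exports.
Local Open Scope classical_set_scope.
Local Open Scope ring_scope.

Section Aux.
Variables (R : realType) (n : nat).
Notation V := 'rV[R]_n.

Lemma dotpC (u v : V) : dotp u v = dotp v u.
Proof. by apply: eq_bigr => i _; rewrite mulrC. Qed.

Lemma dotpDr (u v v' : V) : dotp u (v + v') = dotp u v + dotp u v'.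
Proof. by rewrite /dotp -big_split; apply: eq_bigr => i _; rewrite mxE mulrDr. Qed.

Lemma dotpZr (u v : V) a : dotp u (a *: v) = a * dotp u v.
Proof. by rewrite /dotp mulr_sumr; apply: eq_bigr => i _; rewrite mxE mulrCA. Qed.

Lemma dotpDl (u v v' : V) : dotp (v + v') u = dotp v u + dotp v' u.
Proof. by rewrite dotpC dotpDr !(dotpC u). Qed.

Lemma dotpZl (u v : V) a : dotp (a *: v) u = a * dotp v u.
Proof. by rewrite dotpC dotpZr dotpC. Qed.

Lemma dotpNr (u v : V) : dotp u (- v) = - dotp u v.
Proof. by rewrite -scaleN1r dotpZr mulN1r. Qed.

Lemma dotpBr (u v v' : V) : dotp u (v - v') = dotp u v - dotp u v'.
Proof. by rewrite dotpDr dotpNr. Qed.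

Lemma dotp0r (u : V) : dotp u 0 = 0.
Proof. by rewrite /dotp big1 // => i _; rewrite mxE mulr0. Qed.

Lemma dotp_delta (u : V) j : dotp u (delta_mx 0 j) = u 0 j.
Proof.
rewrite /dotp (bigD1 j) //= big1 => [|i /negbTE nij].
  by rewrite !mxE !eqxx mulr1 addr0.
by rewrite !mxE eq_sym nij andbF mulr0.
Qed.

Lemma key_ineq (a b A B s t : R) : 0 < s -> 0 < t ->
  s / (s + t) * a + t / (s + t) * b <= s / (s + t) * A + t / (s + t) * B ->
  (b - B) / s <= (A - a) / t.
Proof.
move=> s0 t0 H.
have st0 : 0 < s + t by rewrite addr_gt0.
have H' : s * a + t * b <= s * A + t * B.
  move: H; rewrite [s / _ * a]mulrAC [t / _ * b]mulrAC [s / _ * A]mulrAC [t / _ * B]mulrAC.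
  by rewrite -!mulrDl ler_pM2r ?invr_gt0.
rewrite ler_pdivlMr // mulrAC ler_pdivrMr // !mulrBl [b * t]mulrC [B * t]mulrC [A * s]mulrC [a * s]mulrC; lra.
Qed.

Definition supp (k : nat) (d : V) := forall i : 'I_n, (k <= i)%N -> d 0 i = 0.

Lemma subgrad_exists (h : V -> R) x : convex_funR h -> exists w, subdiff h x w.
Proof.
move=> hc.
pose q d := h (x + d) - h x.
have qc : forall a b (l : R), 0 <= l -> l <= 1 ->
    q (l *: a + (1 - l) *: b) <= l * q a + (1 - l) * q b.
  move=> a b l l0 l1; rewrite /q.
  have -> : x + (l *: a + (1 - l) *: b) = l *: (x + a) + (1 - l) *: (x + b).
    by rewrite !scalerDr addrACA -scalerDl subrKC scale1r.
  have := hc (x + a) (x + b) l l0 l1. lra.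
have P : forall k, (k <= n)%N -> exists w, forall d, supp k d -> dotp w d <= q d.
  elim => [_|k IH kn].
    exists 0 => d d0.
    have -> : d = 0 by apply/rowP => i; rewrite d0 // mxE.
    by rewrite dotp0r /q addr0 subrr.
  have [w Hw] := IH (ltnW kn).
  pose e : V := delta_mx 0 (Ordinal kn).
  pose L := [set a | exists m' s, [/\ supp k m', 0 < s & a = (dotp w m' - q (m' - s *: e)) / s]].
  have K : forall m m' s t, supp k m -> supp k m' -> 0 < s -> 0 < t ->
      (dotp w m' - q (m' - s *: e)) / s <= (q (m + t *: e) - dotp w m) / t.
    move=> m m' s t sm sm' s0 t0.
    apply: key_ineq => //.
    have st0 : 0 < s + t by rewrite addr_gt0.
    have l1 : 1 - s / (s + t) = t / (s + t).
      by apply/eqP; rewrite subr_eq -mulrDl addrC divff // gt_eqF.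
    have := qc (m + t *: e) (m' - s *: e) (s / (s + t)) (divr_ge0 (ltW s0) (ltW st0)).
    rewrite ler_pdivrMr // mul1r lerDl (ltW t0) l1 => /(_ isT).
    apply: le_trans.
    rewrite -!dotpZr -dotpDr.
    have -> : s / (s + t) *: (m + t *: e) + t / (s + t) *: (m' - s *: e) =
              s / (s + t) *: m + t / (s + t) *: m'.
      rewrite !scalerDr !scalerN !scalerA addrACA.
      have -> : t / (s + t) * s = s / (s + t) * t.
        by rewrite [LHS]mulrAC [RHS]mulrAC [t * s]mulrC.
      by rewrite subrr addr0.
    apply: Hw => i ki; rewrite !mxE sm // sm' //; lra.
  have sup0 : supp k 0 by move=> i _; rewrite mxE.
  have Lne : L !=set0.
    by exists ((dotp w 0 - q (0 - 1 *: e)) / 1); exists 0, 1; split.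
  have Lub : has_ubound L.
    exists ((q (0 + 1 *: e) - dotp w 0) / 1) => a [m' [s [sm' s0 ->]]].
    exact: K.
  pose al := sup L.
  exists (w + (al - w 0 (Ordinal kn)) *: e) => d sd.
  pose t := d 0 (Ordinal kn).
  pose m := d - t *: e.
  have sm : supp k m.
    move=> i ki; rewrite !mxE.
    have [ki'|ik] := leqP k.+1 i.
      rewrite sd //.
      have -> : (i == Ordinal kn) = false.
        by apply/negbTE; apply/eqP => /(congr1 val) /= ik; rewrite ik ltnn in ki'.
      by rewrite andbF mulr0 subrr.
    have -> : i = Ordinal kn by apply/val_inj => /=; apply/eqP; rewrite eqn_leq ki -ltnS ik.
    by rewrite !eqxx mulr1 subrr.
  have dE : d = m + t *: e by rewrite subrK.
  have emE : dotp e m = 0 by rewrite dotpC dotp_delta; apply: sm => /=.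
  have eeE : dotp e e = 1 by rewrite dotp_delta !mxE !eqxx.
  clearbody m; rewrite dE !dotpDl !dotpDr !dotpZl !dotpZr emE eeE dotp_delta.
  have -> : dotp w m + t * w 0 (Ordinal kn) + ((al - w 0 (Ordinal kn)) * 0 + (al - w 0 (Ordinal kn)) * (t * 1))
           = dotp w m + al * t by ring.
  have [t0|t0|t0] := ltgtP t 0.
  - pose s := - t.
    have s0 : 0 < s by rewrite oppr_gt0.
    have La : L ((dotp w m - q (m - s *: e)) / s) by exists m, s.
    have := ub_le_sup Lub La.
    rewrite ler_pdivrMr // /s scaleNr opprK mulrN.
    rewrite /al; lra.
  - have : al <= (q (m + t *: e) - dotp w m) / t.
      rewrite /al; apply: (ge_sup Lne) => a [m0 [s [sm0 s0 ->]]]; exact: K.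
    rewrite ler_pdivlMr //; rewrite /al; lra.
  - rewrite t0 mulr0 addr0 scale0r addr0; exact: Hw.
have [w Hw] := P n (leqnn n).
exists w => y.
have Hs : supp n (y - x) by move=> i; rewrite leqNgt ltn_ord.
have := Hw (y - x) Hs.
rewrite /q subrKC. lra.
Qed.
End Aux.

Lemma grad_dot (R : realType) (n : nat) (g : 'rV[R]_n -> R) x d :
  differentiable g x -> 'D_d g x = dotp (grad g x) d.
Proof.
move=> dg; rewrite deriveE // {1}(row_sum_delta d) linear_sum /dotp.
by apply: eq_bigr => i _; rewrite linearZ /= mxE deriveE // mulrC.
Qed.

Lemma frac_ineq (R : realType) (F G c : R) : 0 < G -> 2 * c * F - c ^+ 2 * G <= F ^+ 2 / G.
Proof.
move=> G0; rewrite ler_pdivlMr //.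
have -> : F ^+ 2 = (2 * c * F - c ^+ 2 * G) * G + (F - c * G) ^+ 2 by ring.
by rewrite lerDl sqr_ge0.
Qed.

Lemma right_dnbhs (R : realType) (T : topologicalType) (f : R -> T) (l : T) :
  f t @[t --> 0^'] --> l -> f t @[t --> 0^'+] --> l.
Proof.
move=> H P /H; rewrite !nbhs_simpl /= /dnbhs /at_right /within /=.
by apply: filterS => y Py y0; apply: Py; rewrite gt_eqF.
Qed.

Theorem theorem4p1 (R : realType) (n : nat)
  (f g h1 h2 : 'rV[R]_n -> R) (C : set 'rV[R]_n) (xs : 'rV[R]_n) :
  (forall x, 0 <= f x) -> (forall x, 0 <= g x) ->
  closed C -> convex_setR C ->
  (exists x, C x /\ g x != 0) ->
  convex_funR f ->
  (forall x, differentiable g x) -> locally_lipschitz (grad g) ->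
  (forall x, differentiable h1 x) -> locally_lipschitz (grad h1) ->
  convex_funR h2 ->
  (* xs is a local minimizer of f^2/g + h1 - h2 over C ∩ {g <> 0} *)
  (C xs /\ g xs != 0 /\
   exists2 e : R, 0 < e & forall x, C x -> g x != 0 -> `|x - xs| < e ->
     f xs ^+ 2 / g xs + h1 xs - h2 xs <= f x ^+ 2 / g x + h1 x - h2 x) ->
  let cs := f xs / g xs in
  exists u, exists w,
    subdiff_plus_ind (fun x => 2 * cs * f x) C xs u /\ subdiff h2 xs w /\
    u - cs ^+ 2 *: grad g xs + grad h1 xs - w = 0.
Proof.
move=> f0 g0 _ Cconv _ fc dg _ dh1 _ h2c [Cxs [gxs [e e0 Hmin]]] cs.
have [w Hw] := @subgrad_exists _ _ h2 xs h2c.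
exists (cs ^+ 2 *: grad g xs - grad h1 xs + w), w.
split; last split => //; last first.
  by apply/rowP => i; rewrite !mxE; ring.
split => // y Cy.
have gpos : 0 < g xs by rewrite lt_def gxs g0.
have cs0 : 0 <= cs by rewrite /cs divr_ge0.
have g2 : g xs / 2 < g xs by lra.
have [r1 r10 Hr1] : nbhs_ball xs [set z | g xs / 2 < g z].
  apply/nbhs_ballP; have := cvgr_gt _ (differentiable_continuous (dg xs)) _ g2.
  by move=> H; exact: H.
pose r := Num.min e r1.
have r0 : 0 < r by rewrite lt_min e0 r10.
pose d := y - xs.
pose K0 := 2 * cs * (f y - f xs) - dotp w d.
pose Dg t := t^-1 *: ((g \o shift xs) (t *: d) - g xs).
pose Dh t := t^-1 *: ((h1 \o shift xs) (t *: d) - h1 xs).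
pose D := 'D_d g xs.
pose A := `|f y - f xs| + `|f xs - f (xs - d)|.
pose B := `|D| + 1.
pose Q := (A + cs * B) ^+ 2.
pose Kc := 2 * Q / g xs.
have cvDg : Dg t @[t --> 0^'+] --> D.
  by apply: right_dnbhs; have := @diff_derivable _ _ _ g xs d (dg xs).
have cvDh : Dh t @[t --> 0^'+] --> 'D_d h1 xs.
  by apply: right_dnbhs; have := @diff_derivable _ _ _ h1 xs d (dh1 xs).
have cvt : (fun t : R => t) @ 0^'+ --> (0 : R).
  by apply: cvg_at_right_filter; exact: cvg_id.
have cvP : (fun t => K0 - cs ^+ 2 * Dg t + Dh t + t * Kc) @ 0^'+ -->
           K0 - cs ^+ 2 * D + 'D_d h1 xs + 0 * Kc.
  apply: cvgD; last exact: cvgMl.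
  apply: cvgD; last exact: cvDh.
  apply: cvgB; first exact: cvg_cst.
  by apply: cvgMr.
rewrite mul0r addr0 in cvP.
have : 0 <= K0 - cs ^+ 2 * D + 'D_d h1 xs.
  apply: (cvgr_to_ge cvP).
  have dp : 0 < `|d| + 1 by have := normr_ge0 d; lra.
  have Dlt : D < D + 1 by lra.
  have Dgt : D - 1 < D by lra.
  near=> t.
  have t0 : 0 < t by near: t; exact: nbhs_right_gt.
  have t1 : t < 1 by near: t; exact: nbhs_right_lt ltr01.
  have tr : t < r / (`|d| + 1) by near: t; apply: nbhs_right_lt; rewrite divr_gt0.
  have Dg1 : Dg t < D + 1 by near: t; exact: cvgr_lt cvDg _ Dlt.
  have Dg2 : D - 1 < Dg t by near: t; exact: cvgr_gt cvDg _ Dgt.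
  have H5 : f xs ^+ 2 / g xs = 2 * cs * f xs - cs ^+ 2 * g xs.
    by rewrite /cs; field.
  have fxsE : f xs = cs * g xs by rewrite /cs divfK.
  clearbody cs.
  pose z := t *: d + xs.
  have zE : z = t *: y + (1 - t) *: xs.
    by rewrite /z /d; apply/rowP => i; rewrite !mxE; ring.
  have Cz : C z by rewrite zE; apply: Cconv => //; exact: ltW.
  have zx : z - xs = t *: d by rewrite /z addrK.
  have nz : `|z - xs| < r.
    rewrite zx normrZ gtr0_norm //.
    move: tr; rewrite ltr_pdivlMr // mulrDr mulr1; lra.
  have ez : `|z - xs| < e by apply: lt_le_trans nz _; rewrite ge_min lexx.
  have gz : g xs / 2 < g z.
    apply: Hr1; rewrite -ball_normE /ball_ /= distrC.
    by apply: lt_le_trans nz _; rewrite ge_min lexx orbT.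
  have gz0 : 0 < g z by lra.
  have gzn : g z != 0 by rewrite gt_eqF.
  have H1 := Hmin z Cz gzn ez.
  have H2 := Hw z; rewrite zx dotpZr in H2.
  have H3 := fc y xs t (ltW t0) (ltW t1); rewrite -zE in H3.
  have H6 : 2 * cs * f z <= 2 * cs * (t * f y + (1 - t) * f xs).
    by apply: ler_wpM2l => //; rewrite mulr_ge0.
  pose Rz := (f z - cs * g z) ^+ 2 / g z.
  have HR : f z ^+ 2 / g z = 2 * cs * f z - cs ^+ 2 * g z + Rz by rewrite /Rz; field.
  pose a := (f z - f xs) / t.
  pose b := Dg t.
  have bE : b = (g z - g xs) / t by rewrite /b /Dg /= mulrC.
  have hE : Dh t = (h1 z - h1 xs) / t by rewrite /Dh /= mulrC.
  have tn : t != 0 by rewrite gt_eqF.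
  have e1 : f z - cs * g z = t * (a - cs * b).
    by rewrite bE /a fxsE; field.
  have RzE : Rz = t ^+ 2 * ((a - cs * b) ^+ 2 / g z) by rewrite /Rz e1 exprMn -mulrA.
  have aub : a <= f y - f xs by rewrite /a ler_pdivrMr //; lra.
  have tp : 0 < 1 + t by lra.
  have tpn : 1 + t != 0 by rewrite gt_eqF.
  have Hx : (1 + t)^-1 *: z + (1 - (1 + t)^-1) *: (xs - d) = xs.
    by rewrite /z; apply/rowP => i; rewrite !mxE; field.
  have itp : 0 <= (1 + t)^-1 by rewrite invr_ge0 ltW.
  have H7 := fc z (xs - d) ((1 + t)^-1) itp.
  have := H7; rewrite Hx => /(_ _) H8.
  have H9 : f xs <= (1 + t)^-1 * f z + (1 - (1 + t)^-1) * f (xs - d).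
    by apply: H8; rewrite invf_le1 //; lra.
  have H10 : (1 + t) * f xs <= f z + t * f (xs - d).
    have := ler_wpM2l (ltW tp) H9.
    by rewrite (_ : (1 + t) * ((1 + t)^-1 * f z + (1 - (1 + t)^-1) * f (xs - d)) = f z + t * f (xs - d)) //; field.
  have alb : f xs - f (xs - d) <= a by rewrite /a ler_pdivlMr //; lra.
  have aA : `|a| <= A.
    rewrite ler_norml /A.
    have := ler_norm (f y - f xs); have := ler_norm (- (f xs - f (xs - d))).
    rewrite normrN; have := normr_ge0 (f y - f xs); have := normr_ge0 (f xs - f (xs - d)).
    lra.
  have bB : `|b| <= B.
    rewrite ler_norml /B.
    have := ler_norm D; have := ler_norm (- D); rewrite normrN /b; lra.
  have abQ : `|a - cs * b| <= A + cs * B.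
    apply: le_trans (ler_normB _ _) _.
    rewrite [`|cs * b|]normrM (ger0_norm cs0).
    have := ler_wpM2l cs0 bB; lra.
  have sqQ : (a - cs * b) ^+ 2 <= Q.
    rewrite -[(a - cs * b) ^+ 2]ger0_norm ?sqr_ge0 // normrX /Q !expr2.
    by apply: ler_pM => //; apply: le_trans abQ.
  have Q0 : 0 <= Q by rewrite /Q sqr_ge0.
  have Kc0 : 0 <= Kc by rewrite /Kc divr_ge0 // mulr_ge0.
  have HRz : Rz <= t ^+ 2 * Kc.
    rewrite RzE; apply: ler_wpM2l; first exact: sqr_ge0.
    apply: (@le_trans _ _ (Q / g z)); first by rewrite ler_pM2r ?invr_gt0.
    rewrite ler_pdivrMr //.
    have : Kc * (g xs / 2) <= Kc * g z by apply: ler_wpM2l => //; exact: ltW.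
    have : Kc * (g xs / 2) = Q by rewrite /Kc; field.
    lra.
  rewrite -(pmulr_rge0 _ t0) -/b bE hE.
  rewrite (_ : t * (K0 - cs ^+ 2 * ((g z - g xs) / t) + (h1 z - h1 xs) / t + t * Kc) = t * K0 - cs ^+ 2 * (g z - g xs) + (h1 z - h1 xs) + t ^+ 2 * Kc); last by field.
  rewrite /K0.
  lra.
rewrite /D !grad_dot // /K0 -/d !(dotpC _ _ _ d) dotpDr dotpBr dotpZr.
lra.
Unshelve. all: by end_near.
Qed.
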